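(* Let $a_{ij}\ge 0$ for $1\le i\ne j\le N$ with $a_{ij}=a_{ji}$, and let $\mathbf S(t)$ be the stochastic consensus model: independent Poisson processes $N^{ij}$ of rate $a_{ij}$, and $\mathrm dS_i=\sum_{j\ne i}(S_j-S_i)\,\mathrm dN^{ij}$. Let $V(\mathbf S)=\frac1N\sum_{i=1}^N|S_i-\bar S|^2=\frac{1}{2N^2}\sum_{i,j}|S_i-S_j|^2$ with $\bar S=\frac1N\sum_i S_i$. Then $$\frac{d}{dt}\mathbb E[V(\mathbf S(t))]=-\frac{1}{N^2}\mathbb E\Big[\sum_{i,j}a_{ij}|S_j(t)-S_i(t)|^2\Big].$$
   Context: Equivalently, the process has generator $\frac{d}{dt}\mathbb E[\varphi(\mathbf S)]=\sum_{i\ne j}a_{ij}\mathbb E[\varphi(\Phi_{ij}(\mathbf S))-\varphi(\mathbf S)]$, where $\Phi_{ij}$ replaces the $i$th coordinate by the $j$th. *)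

(* Defs.v *)
From HB Require Import structures.
From mathcomp Require Import all_boot all_order all_algebra.
From mathcomp Require Import all_classical all_reals all_analysis.
Set Implicit Arguments. Unset Strict Implicit. Unset Printing Implicit Defensive.
Import Order.TTheory GRing.Theory Num.Theory.
Local Open Scope ring_scope.

Definition config (R : realType) (N d : nat) := 'I_N -> 'rV[R]_d.

Definition sqnorm (R : realType) (d : nat) (v : 'rV[R]_d) : R :=
  \sum_(k < d) (v 0 k) ^+ 2.

Definition Phi (R : realType) (N d : nat) (i j : 'I_N) (S : config R N d)
  : config R N d := fun k => if k == i then S j else S k.

Definition mean (R : realType) (N d : nat) (S : config R N d) : 'rV[R]_d :=
  N%:R^-1 *: \sum_(i < N) S i.

Definition Var (R : realType) (N d : nat) (S : config R N d) : R :=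
  N%:R^-1 * \sum_(i < N) sqnorm (S i - mean S).

(* E t phi = E[phi(S(t))]: the law of the process at each time t,
   seen as a linear, normalized expectation functional on observables. *)
Definition is_expectation (R : realType) (N d : nat)
  (E : R -> (config R N d -> R) -> R) : Prop :=
  forall t : R,
    (forall phi psi, E t (fun S => phi S + psi S) = E t phi + E t psi) /\
    (forall (c : R) phi, E t (fun S => c * phi S) = c * E t phi) /\
    E t (fun _ => 1) = 1.

(* The stochastic consensus model with rates a_ij, described by its
   generator (Kolmogorov equation):
   d/dt E[phi(S)] = sum_{i<>j} a_ij E[phi(Phi_ij S) - phi S]. *)
Definition consensus_generator (R : realType) (N d : nat)
  (a : 'I_N -> 'I_N -> R) (E : R -> (config R N d -> R) -> R) : Prop :=
  forall (phi : config R N d -> R) (t : R),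
    is_derive t (1 : R) (fun u => E u phi)
      (\sum_(i < N) \sum_(j < N | j != i)
          a i j * E t (fun S => phi (Phi i j S) - phi S)).

(* Main.v *)
Require Import Defs.
From HB Require Import structures.
From mathcomp Require Import all_boot all_order all_algebra.
From mathcomp Require Import all_classical all_reals all_analysis.
From mathcomp Require Import ring lra.
Import Order.TTheory GRing.Theory Num.Theory.
Set Implicit Arguments. Unset Strict Implicit. Unset Printing Implicit Defensive.
Local Open Scope ring_scope.

Section Scal.
Variables (R : realType) (N : nat).

Definition vv (x : 'I_N -> R) : R :=
  N%:R^-1 * \sum_(i < N) (x i - N%:R^-1 * \sum_(l < N) x l) ^+ 2.

Lemma sum_upd (F : R -> R) (x : 'I_N -> R) (i : 'I_N) (y : R) :
  \sum_(l < N) F (if l == i then y else x l) = \sum_(l < N) F (x l) + F y - F (x i).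
Proof.
rewrite (bigD1 i) //= eqxx [in RHS](bigD1 i) //=.
rewrite (eq_bigr (fun l => F (x l))); last by move=> l /negPf ->.
ring.
Qed.

Lemma vvE (x : 'I_N -> R) (i : 'I_N) :
  vv x = N%:R^-1 * \sum_(l < N) x l ^+ 2 - (N%:R^-1 * \sum_(l < N) x l) ^+ 2.
Proof.
have hN : N%:R != 0 :> R by rewrite pnatr_eq0 -lt0n; apply: (leq_ltn_trans _ (ltn_ord i)).
rewrite /vv; set m := N%:R^-1 * \sum_(l < N) x l. idtac.
have -> : \sum_(l < N) (x l - m) ^+ 2 =
   \sum_(l < N) x l ^+ 2 - 2 * m * \sum_(l < N) x l + N%:R * m ^+ 2.
  rewrite mulr_sumr -sumrB.
  have -> : N%:R * m ^+ 2 = \sum_(l < N) m ^+ 2 by rewrite sumr_const card_ord mulr_natl.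
  rewrite -big_split /=; apply: eq_bigr => l _; ring.
by rewrite /m; field.
Qed.

Lemma vv_upd (x : 'I_N -> R) (i j : 'I_N) :
  let m := N%:R^-1 * \sum_(l < N) x l in
  let g y := N%:R^-1 * (y ^+ 2 - 2 * m * y) in
  vv (fun l => if l == i then x j else x l) - vv x =
   g (x j) - g (x i) - (N%:R ^+ 2)^-1 * (x j - x i) ^+ 2.
Proof.
move=> m g.
have hN : N%:R != 0 :> R by rewrite pnatr_eq0 -lt0n; apply: (leq_ltn_trans _ (ltn_ord i)).
rewrite !(vvE _ i) (sum_upd (fun y => y ^+ 2)) (sum_upd id) /g /m.
by field.
Qed.

Lemma antisym (a : 'I_N -> 'I_N -> R) (h : 'I_N -> R)
  (a_sym : forall i j : 'I_N, i != j -> a i j = a j i) :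
  \sum_(i < N) \sum_(j < N | j != i) a i j * (h j - h i) = 0.
Proof.
have E1 : forall i, \sum_(j < N | j != i) a i j * (h j - h i) =
  \sum_(j < N | j != i) a i j * h j - \sum_(j < N | j != i) a i j * h i.
  by move=> i; rewrite -sumrB; apply: eq_bigr => j _; rewrite mulrBr.
under eq_bigr => i _ do rewrite E1.
rewrite sumrB (exchange_big_dep xpredT) //=; apply/eqP; rewrite subr_eq0; apply/eqP.
apply: eq_bigr => j _; apply: eq_big => [i|i]; first by rewrite eq_sym.
by move=> hij; rewrite a_sym // eq_sym.
Qed.
End Scal.

Section Main.
Variables (R : realType) (N d : nat).

Lemma VarE (S : config R N d) : Var S = \sum_(k < d) vv (fun l => S l 0 k).
Proof.
rewrite /Var /sqnorm exchange_big /= mulr_sumr; apply: eq_bigr => k _.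
rewrite /vv; congr (_ * _); apply: eq_bigr => i _.
by rewrite /mean !mxE summxE.
Qed.

Lemma sqE (u v : 'rV[R]_d) : sqnorm (u - v) = \sum_(k < d) (u 0 k - v 0 k) ^+ 2.
Proof. by apply: eq_bigr => k _; rewrite !mxE. Qed.

Lemma PhiE (S : config R N d) i j k :
  (fun l => Phi i j S l 0 k) = fun l => if l == i then S j 0 k else S l 0 k.
Proof. by apply/funext => l; rewrite /Phi; case: ifP. Qed.

Lemma pointwise (a : 'I_N -> 'I_N -> R)
  (a_sym : forall i j : 'I_N, i != j -> a i j = a j i) (S : config R N d) :
  \sum_(i < N) \sum_(j < N | j != i) a i j * (Var (Phi i j S) - Var S) =
  - (N%:R ^+ 2)^-1 * \sum_(i < N) \sum_(j < N | j != i) a i j * sqnorm (S j - S i).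
Proof.
pose m k := N%:R^-1 * \sum_(l < N) S l 0 k.
pose G k y := N%:R^-1 * (y ^+ 2 - 2 * m k * y).
have step : forall i j, a i j * (Var (Phi i j S) - Var S) =
   \sum_(k < d) a i j * (G k (S j 0 k) - G k (S i 0 k))
   - (N%:R ^+ 2)^-1 * (a i j * sqnorm (S j - S i)).
  move=> i j; rewrite !VarE -sumrB sqE mulr_sumr mulr_sumr mulr_sumr -sumrB.
  apply: eq_bigr => k _; rewrite PhiE vv_upd /= -/(m k) /G; ring.
under eq_bigr => i _ do under eq_bigr => j _ do rewrite step.
under eq_bigr => i _ do rewrite sumrB.
rewrite sumrB.
have -> : \sum_(i < N) \sum_(j < N | j != i) \sum_(k < d)
      a i j * (G k (S j 0 k) - G k (S i 0 k)) = 0.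
  under eq_bigr => i _ do rewrite exchange_big /=.
  rewrite exchange_big /= big1 // => k _.
  exact: (@antisym R N a (fun l => G k (S l 0 k)) a_sym).
rewrite sub0r mulNr mulr_sumr; congr (- _).
by apply: eq_bigr => i _; rewrite mulr_sumr.
Qed.

End Main.

Lemma E_lin (R : realType) (N d : nat) (E : R -> (config R N d -> R) -> R)
  (hE : is_expectation E) (t : R) (I : Type) (r : seq I) (P : pred I)
  (F : I -> config R N d -> R) :
  E t (fun S => \sum_(i <- r | P i) F i S) = \sum_(i <- r | P i) E t (F i).
Proof.
have [Hadd [Hsc H1]] := hE t.
elim: r => [|x r IH].
  rewrite big_nil.
  have -> : (fun S : config R N d => \sum_(i <- [::] | P i) F i S) =
            (fun S => 0 * (fun _ => 1) S) by apply/funext => S; rewrite big_nil mul0r.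
  by rewrite Hsc mul0r.
rewrite big_cons; case Px: (P x).
  have -> : (fun S : config R N d => \sum_(i <- x :: r | P i) F i S) =
            (fun S => F x S + (fun S => \sum_(i <- r | P i) F i S) S).
    by apply/funext => S; rewrite big_cons Px.
  by rewrite Hadd IH.
rewrite -IH; congr (E t _); apply/funext => S; by rewrite big_cons Px.
Qed.

Theorem mainTheorem11 (R : realType) (N d : nat) (a : 'I_N -> 'I_N -> R)
  (E : R -> (config R N d -> R) -> R)
  (a_ge0 : forall i j : 'I_N, i != j -> 0 <= a i j)
  (a_sym : forall i j : 'I_N, i != j -> a i j = a j i)
  (hE : is_expectation E)
  (hgen : consensus_generator a E) (t : R) :
  is_derive t (1 : R) (fun u => E u (@Var R N d))
    (- (N%:R ^+ 2)^-1 *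
       E t (fun S => \sum_(i < N) \sum_(j < N | j != i)
                       a i j * sqnorm (S j - S i))).
Proof.
have D := hgen (@Var R N d) t.
have [_ [Hsc _]] := hE t.
suff -> : - (N%:R ^+ 2)^-1 *
       E t (fun S => \sum_(i < N) \sum_(j < N | j != i)
                       a i j * sqnorm (S j - S i)) =
   \sum_(i < N) \sum_(j < N | j != i)
          a i j * E t (fun S => Var (Phi i j S) - Var S) by exact: D.
rewrite -Hsc.
under [RHS]eq_bigr => i _ do under eq_bigr => j _ do rewrite -Hsc.
under [RHS]eq_bigr => i _ do rewrite -(E_lin hE).
rewrite -(E_lin hE); congr (E t _); apply/funext => S.
by rewrite pointwise.
Qed.
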